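(* Let $L$ be a countable, locally finite CW complex possessing the connected pairs property with respect to Polish spaces, and let $X$ be a compactum. Suppose that each pair $K\subset C$ of metrizable compacta with $\text{e-}\dim C\le [L]$ is $X$-connected provided $K\subset C$ is $[L]$-connected with respect to Polish spaces. Then for every metrizable space $Y$ with $Y\in AE([L],\mathcal C)$ and $\text{e-}\dim Y\le [L]$ we have $Y\in AE(X)$.
   Context: All spaces are Tychonoff and all maps continuous; a compactum is a compact Hausdorff space. For spaces $X,Y$, $Y\in AE(X)$ means every map $f\colon A\to Y$ defined on a closed subspace $A\subset X$ extends to a map $X\to Y$. For a normal space $X$ and a CW complex $L$, $\text{e-}\dim X\le [L]$ means $L\in AE(X)$. $\mathcal C$ denotes the class of metrizable compacta, and $Y\in AE([L],\mathcal C)$ means $Y\in AE(Z)$ for every metrizable compactum $Z$ with $\text{e-}\dim Z\le [L]$. For a normal space $X$, a pair of spaces $V\subset U$ is $X$-connected if for every closed $A\subset X$, every map $A\to V$ extends to a map $X\to U$; the pair is $[L]$-connected with respect to Polish spaces if it is $Z$-connected for every Polish space $Z$ with $\text{e-}\dim Z\le [L]$. $L$ possesses the connected pairs property with respect to Polish spaces if for every metrizable compactum $K$ with $\text{e-}\dim K\le [L]$ there is a metrizable compactum $C\supset K$ with $\text{e-}\dim C\le [L]$ such that the pair $K\subset C$ is $[L]$-connected with respect to Polish spaces. *)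

(* Defs.v *)
From HB Require Import structures.
From mathcomp Require Import all_boot all_order all_algebra.
From mathcomp Require Import all_classical all_reals all_analysis.
From mathcomp Require Import Rstruct Rstruct_topology.
From Stdlib Require Rdefinitions.
Notation R := Rdefinitions.R.

Set Implicit Arguments.
Unset Strict Implicit.
Unset Printing Implicit Defensive.

Import Order.TTheory GRing.Theory Num.Theory.
Local Open Scope classical_set_scope.
Local Open Scope ring_scope.

Definition metric_for (T : topologicalType) (d : T -> T -> R) : Prop :=
  [/\ (forall x y : T, 0 <= d x y),
      (forall x y : T, d x y = 0 <-> x = y),
      (forall x y : T, d x y = d y x),
      (forall x y z : T, d x z <= d x y + d y z) &
      (forall U : set T, open U <->
         (forall x, U x -> exists e : R, 0 < e /\ [set y | d x y < e] `<=` U))].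

Definition metrizable (T : topologicalType) : Prop :=
  exists d : T -> T -> R, metric_for d.

Definition metric_complete (T : topologicalType) (d : T -> T -> R) : Prop :=
  forall u : nat -> T,
    (forall e : R, 0 < e -> exists N : nat, forall m n : nat,
        (N <= m)%N -> (N <= n)%N -> d (u m) (u n) < e) ->
    exists x : T, forall e : R, 0 < e -> exists N : nat, forall n : nat,
        (N <= n)%N -> d (u n) x < e.

Definition separable (T : topologicalType) : Prop :=
  exists S : set T, countable S /\ dense S.

Definition polish (T : topologicalType) : Prop :=
  separable T /\ exists d : T -> T -> R, metric_for d /\ metric_complete d.

Definition compactum (T : topologicalType) : Prop :=
  compact [set: T] /\ hausdorff_space T.

Definition metrizable_compactum (T : topologicalType) : Prop :=
  compactum T /\ metrizable T.

Definition embedding (S T : topologicalType) (e : S -> T) : Prop :=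
  [/\ continuous e, injective e &
      forall U : set S, open U ->
        exists V : set T, open V /\ e @` U = V `&` range e].

Definition AE (X Y : topologicalType) : Prop :=
  forall A : set X, closed A ->
  forall f : set_type A -> Y, continuous f ->
  exists g : X -> Y, continuous g /\ forall a : set_type A, g (set_val a) = f a.

Definition edim_le (X L : topologicalType) : Prop := AE X L.

Definition AE_L_C (L Y : topologicalType) : Prop :=
  forall Z : topologicalType, metrizable_compactum Z -> edim_le Z L -> AE Z Y.

Definition X_connected (X U : topologicalType) (V : set U) : Prop :=
  forall A : set X, closed A ->
  forall f : set_type A -> set_type V, continuous f ->
  exists g : X -> U, continuous g /\
    forall a : set_type A, g (set_val a) = set_val (f a).

Definition L_connected_polish (L U : topologicalType) (V : set U) : Prop :=
  forall Z : topologicalType, polish Z -> edim_le Z L -> X_connected Z V.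

Definition connected_pairs_property (L : topologicalType) : Prop :=
  forall K : topologicalType, metrizable_compactum K -> edim_le K L ->
  exists (C : topologicalType) (e : K -> C),
    [/\ metrizable_compactum C, edim_le C L, embedding e &
        L_connected_polish L (range e)].

Definition sqnorm (n : nat) (v : 'rV[R]_n) : R := \sum_(i < n) (v ord0 i) ^+ 2.
Definition cball (n : nat) : set 'rV[R]_n := [set v | sqnorm v <= 1].
Definition oball (n : nat) : set 'rV[R]_n := [set v | sqnorm v < 1].
Definition sphere (n : nat) : set 'rV[R]_n := [set v | sqnorm v = 1].
Arguments cball n : clear implicits.
Arguments oball n : clear implicits.
Arguments sphere n : clear implicits.

(** L is (the space of) a countable, locally finite CW complex: cells are
   indexed by a (necessarily countable) set J of naturals; cell i has
   dimension dim i and characteristic map phi i : D^(dim i) -> L. *)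
Definition countable_locally_finite_CW (L : topologicalType) : Prop :=
  hausdorff_space L /\
  exists (J : set nat) (dim : nat -> nat) (phi : forall i : nat, 'rV[R]_(dim i) -> L),
  let ocell i := phi i @` oball (dim i) in
  let ccell i := phi i @` cball (dim i) in
  [/\
      (forall i, J i -> {within cball (dim i), continuous (phi i)} /\
         {in oball (dim i) &, injective (phi i)} /\
         forall O : set 'rV[R]_(dim i), open O ->
           exists O' : set L, open O' /\
             phi i @` (O `&` oball (dim i)) = O' `&` ocell i),
      ((forall x : L, exists i, J i /\ ocell i x) /\
       (forall i j x, J i -> J j -> ocell i x -> ocell j x -> i = j)),
      (forall i, J i -> exists F : set nat,
         [/\ finite_set F, F `<=` J, (forall j, F j -> (dim j < dim i)%N) &
             phi i @` sphere (dim i) `<=` \bigcup_(j in F) ocell j]),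
      (forall A : set L, (forall i, J i -> closed (A `&` ccell i)) -> closed A) &
      (forall x : L, exists U : set L, nbhs x U /\
         finite_set [set i | J i /\ U `&` ccell i !=set0])].

(* Main.v *)
Set Warnings "-notation-overridden,-ambiguous-paths,-notation-incompatible-prefix".
Require Import Defs.
From mathcomp Require Import all_boot all_order all_algebra.
From mathcomp Require Import all_classical all_reals all_analysis.
From mathcomp Require Import lra.
From mathcomp Require Import Rstruct Rstruct_topology.
Import Order.TTheory GRing.Theory Num.Theory.
Local Open Scope classical_set_scope.

Lemma open_sub (T : topologicalType) (S : set T) (U : set (set_type S)) :
  open U <-> exists V, open V /\ set_val @^-1` V = U.
Proof. split; [case => V ? <-; by exists V| case => V [? <-]; by exists V]. Qed.

Lemma cont_comp {A B C : topologicalType} {f : A -> B} {g : B -> C} :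
  continuous f -> continuous g -> continuous (g \o f).
Proof.
move=> /continuousP cf /continuousP cg; apply/continuousP => U oU.
exact: (cf _ (cg _ oU)).
Qed.

Lemma sv_cont {T : topologicalType} {S : set T} : continuous (@set_val T S).
Proof. by apply/continuousP => U oU; apply/open_sub; exists U. Qed.

Lemma cont_into (T Z : topologicalType) (S : set T) (g : Z -> set_type S) :
  continuous (set_val \o g) -> continuous g.
Proof.
move=> /continuousP cg; apply/continuousP => U /open_sub [V [oV <-]].
exact: cg.
Qed.

Lemma sub_hausdorff (T : topologicalType) (S : set T) :
  hausdorff_space T -> hausdorff_space (set_type S).
Proof.
rewrite !open_hausdorff => hT x y xy.
have : set_val x != set_val y.
  by rewrite set_valE; apply: contra_neq xy; exact: val_inj.
move=> /hT [[P Q] /= [Px Qy] [oP oQ PQ]].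
exists (set_val @^-1` P, set_val @^-1` Q) => /=.
  by rewrite !inE; move: Px Qy; rewrite !inE.
split; try by apply/open_sub; eexists; split; last reflexivity.
by rewrite -preimage_setI (eqP PQ) preimage_set0.
Qed.

Lemma sub_compact (T : topologicalType) (S : set T) :
  compact S -> compact [set: set_type S].
Proof.
move=> cS F PF _.
have [|p [Sp clp]] := @cS (set_val @ F) (fmap_proper_filter set_val PF).
  by apply: (@filterS _ F _ setT) => [x _|]; [exact: set_valP|exact: filterT].
exists (exist _ p (mem_set Sp)); split => //.
move=> B N FB; rewrite nbhsE /=; case=> O [oO Ox] ON.
have /open_sub [V [oV Ve]] := oO.
have FB' : (set_val @ F) (set_val @` B).
  change (F (set_val @^-1` (set_val @` B))).
  by apply: (@filterS _ F _ B) => // b Bb; exists b.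
have nV : nbhs p V.
  apply: open_nbhs_nbhs; split => //.
  by rewrite -Ve set_valE /= in Ox.
have [t [[b Bb bt] Vt]] := clp _ _ FB' nV.
exists b; split => //; apply: ON; rewrite -Ve /= bt //.
Qed.

Local Open Scope ring_scope.

Lemma ball_open (T : topologicalType) (d : T -> T -> R) :
  metric_for d -> forall x (e : R), open [set y | d x y < e].
Proof.
case=> d0 d1 d2 d3 dop x e; apply/dop => y /= dxy.
exists (e - d x y); split; first by rewrite subr_gt0.
move=> z /= dyz; have := d3 x y z; lra.
Qed.

Lemma metric_hausdorff' (T : topologicalType) : metrizable T -> hausdorff_space T.
Proof.
case=> d dm; have [d0 d1 d2 d3 dop] := dm.
rewrite open_hausdorff => x y xy.
have dpos : 0 < d x y.
  rewrite lt_neqAle d0 andbT eq_sym; apply/eqP => /d1 /eqP; exact/negP.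
exists ([set z | d x z < d x y / 2], [set z | d y z < d x y / 2]) => /=.
  by rewrite !inE /=; split; [have := d1 x x|have := d1 y y] => -[_ ->] //; lra.
split; try exact: ball_open.
apply/eqP/seteqP; split => // z [/= h1 h2].
have := d3 x z y; have := d2 z y; lra.
Qed.

Lemma sub_metrizable (T : topologicalType) (S : set T) :
  metrizable T -> metrizable (set_type S).
Proof.
case=> d dm; have [d0 d1 d2 d3 dop] := dm.
exists (fun x y => d (set_val x) (set_val y)); split => //.
- move=> x y; split => [/d1|->]; last by apply/d1.
  by rewrite set_valE; exact: val_inj.
- move=> U; split.
  + move=> /open_sub [V [oV <-]] x Vx.
    have [e [e0 eV]] := (dop V).1 oV _ Vx.
    by exists e; split => // y dy; exact: eV.
  + move=> H; apply/open_sub.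
    exists (\bigcup_(p in [set p : set_type S * R | U p.1 /\ 0 < p.2 /\
              [set y | d (set_val p.1) (set_val y) < p.2] `<=` U])
             [set y | d (set_val p.1) y < p.2]).
    split; first by apply: bigcup_open => p _; exact: ball_open.
    apply/seteqP; split.
      by move=> y [[x r] /= [_ [_ sub]] dy]; exact: sub.
    move=> x Ux; have [e [e0 eU]] := H x Ux.
    exists (x, e) => //=; have := d1 (set_val x) (set_val x); case=> _ -> //.
Qed.

Lemma closed_sub_image (T : topologicalType) (S : set T) (B : set (set_type S)) :
  closed S -> closed B -> closed (set_val @` B).
Proof.
move=> cS /closed_openC /open_sub [V [oV Ve]].
have -> : set_val @` B = S `&` ~` V.
  apply/seteqP; split.
    move=> _ [b Bb <-]; split; first exact: set_valP.
    move=> Vb; have : (~` B) b by rewrite -Ve.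
    by apply.
  move=> x [Sx nVx]; exists (exist _ x (mem_set Sx)) => //.
  apply: contrapT => nB.
  have : (set_val @^-1` V) (exist _ x (mem_set Sx)) by rewrite Ve.
  by rewrite /= set_valE.
exact: closedI cS (open_closedC oV).
Qed.

Lemma sub_AE (T L : topologicalType) (S : set T) :
  closed S -> AE T L -> AE (set_type S) L.
Proof.
move=> cS hT B cB h ch.
set B' := set_val @` B.
have cB' : closed B' by exact: closed_sub_image.
have BS : forall b : set_type B', S (set_val b).
  case=> y yB; rewrite set_valE /=; have [x _ <-] := set_mem yB; exact: set_valP.
pose s (b : set_type B') : set_type S := exist _ (set_val b) (mem_set (BS b)).
have sB : forall b, B (s b).
  case=> y yB; have := set_mem yB => -[x Bx xy].
  suff -> : s (exist _ y yB) = x by [].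
  apply: val_inj => /=; rewrite set_valE /= -xy set_valE //.
pose phi b : set_type B := exist _ (s b) (mem_set (sB b)).
have cphi : continuous phi.
  apply: cont_into; apply: cont_into.
  have -> : set_val \o (set_val \o phi) = set_val.
    by apply: funext => b; rewrite /= !set_valE.
  exact: sv_cont.
have [k [ck kE]] := hT B' cB' (h \o phi) (cont_comp cphi ch).
exists (k \o set_val); split; first exact: cont_comp (@sv_cont _ S) ck.
move=> a.
have aB' : set_val (set_val a) \in B' by apply: mem_set; exists (set_val a) => //; exact: set_valP.
have := kE (exist (fun x => x \in B') _ aB').
have -> : set_val (exist (fun x => x \in B') (set_val (set_val a)) aB') = set_val (set_val a).
  by rewrite set_valE.
move=> /= ->; congr h; apply: val_inj; apply: val_inj => /=.
rewrite !set_valE //.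
Qed.

Local Close Scope ring_scope.
Arguments metric_hausdorff' {T}.
Arguments sub_compact {T S}.
Arguments sub_hausdorff {T S}.
Arguments sub_metrizable {T S}.
Arguments sub_AE {T L S}.
Arguments cont_into {T Z S g}.

Theorem lemma3p2 :
  forall L : topologicalType,
    countable_locally_finite_CW L ->
    connected_pairs_property L ->
  forall X : topologicalType,
    compactum X ->
    (forall (C : topologicalType) (K : set C),
        metrizable_compactum C -> compact K -> edim_le C L ->
        L_connected_polish L K -> X_connected X K) ->
  forall Y : topologicalType,
    metrizable Y -> AE_L_C L Y -> edim_le Y L ->
    AE X Y.
Proof.
move=> L _ cpp X cX hX Y mY aeY edY A cA f cf.
have hY := metric_hausdorff' mY.
have cAc : compact A := subclosed_compact cA cX.1 (subsetT A).
have cK : compact (range f) :=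
  continuous_compact (continuous_subspaceT cf) (sub_compact cAc).
have clK : closed (range f) := compact_closed hY cK.
pose K' := set_type (range f).
have mK : metrizable_compactum K'.
  split; [split|].
  - exact: sub_compact cK.
  - exact: sub_hausdorff hY.
  - exact: sub_metrizable mY.
have eK : edim_le K' L := sub_AE clK edY.
have [C [e [mC eC [ce ie oe] Lc]]] := cpp K' mK eK.
have cR : compact (range e) :=
  continuous_compact (continuous_subspaceT ce) (sub_compact cK).
have XC := hX C (range e) mC cR eC Lc.
pose fK (a : set_type A) : K' := exist _ (f a) (mem_set (imageT f a)).
have cfK : continuous fK.
  apply: cont_into; have -> : set_val \o fK = f.
    by apply: funext => a; rewrite /= set_valE.
  exact: cf.
pose f2 (a : set_type A) : set_type (range e) :=
  exist _ (e (fK a)) (mem_set (imageT e (fK a))).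
have cf2 : continuous f2.
  apply: cont_into; have -> : set_val \o f2 = e \o fK.
    by apply: funext => a; rewrite /= set_valE.
  exact: cont_comp cfK ce.
have [g [cg gE]] := XC A cA f2 cf2.
have aeC : AE C Y := aeY C mC eC.
have clR : closed (range e) := compact_closed mC.1.2 cR.
have exr : forall r : set_type (range e), exists k : K', e k = set_val r.
  case=> r rR; rewrite set_valE /=; have [k _ <-] := set_mem rR; by exists k.
pose einv r := proj1_sig (cid (exr r)).
have einvE r : e (einv r) = set_val r := proj2_sig (cid (exr r)).
have ceinv : continuous einv.
  apply/continuousP => U oU; have [V [oV VE]] := oe U oU.
  apply/open_sub; exists V; split => //; apply/seteqP; split => r /=.
  - move=> Vr; have : (V `&` range e) (set_val r).
      by split => //; exact: set_valP.
    rewrite -VE => -[k Uk ek].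
    suff -> : einv r = k by [].
    by apply: ie; rewrite einvE ek.
  - move=> Ue; have : (e @` U) (set_val r) by exists (einv r) => //.
    by rewrite VE => -[].
have [h [ch hE]] := aeC (range e) clR (set_val \o einv) (cont_comp ceinv sv_cont).
exists (h \o g); split; first exact: cont_comp cg ch.
move=> a /=; rewrite gE hE /=.
have -> : einv (f2 a) = fK a by apply: ie; rewrite einvE set_valE.
by rewrite set_valE.
Qed.
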